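(* Let $G$ be a $2$-permutable graph. Then $\chi_i(G\,\square\,K_2)=\Delta(G\,\square\,K_2)+1$.
   Context: All graphs are finite and simple. $K^-_{2n}$ is the complete graph on $2n$ vertices with a perfect matching removed. A homomorphism $f:G\to H$ is a map $V(G)\to V(H)$ with $f(u)f(v)\in E(H)$ whenever $uv\in E(G)$; it is locally injective if for every vertex $v$, $f$ is injective on $N(v)$. A connected $2d$-regular graph $G$ is $2$-permutable if it admits a locally injective homomorphism to $K^-_{2d+2}$. An incidence of $G$ is a pair $(v,e)$ with $v\in e\in E(G)$; incidences $(v,e),(u,f)$ are adjacent if $v=u$, or $e=f$, or $vu\in\{e,f\}$; an incidence coloring gives adjacent incidences distinct colors; $\chi_i(G)$ is the least number of colors of an incidence coloring. $\Delta$ denotes maximum degree. $G\,\square\,H$ is the Cartesian product: vertex set $V(G)\times V(H)$, $(u,v)\sim(u',v')$ iff ($uu'\in E(G)$, $v=v'$) or ($u=u'$, $vv'\in E(H)$). *)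

(* Defs.v *)
From mathcomp Require Import all_boot.
Set Implicit Arguments. Unset Strict Implicit. Unset Printing Implicit Defensive.

(* A finite simple graph is a symmetric irreflexive relation e on a finType T. *)

Definition nbhd (T : finType) (e : rel T) (v : T) : {set T} := [set w | e v w].

Definition regular (T : finType) (e : rel T) (k : nat) : Prop :=
  forall v : T, #|nbhd e v| = k.

Definition connected_graph (T : finType) (e : rel T) : Prop :=
  0 < #|T| /\ forall x y : T, connect e x y.

Definition is_hom (T U : finType) (e : rel T) (e' : rel U) (f : T -> U) : Prop :=
  forall u v, e u v -> e' (f u) (f v).

Definition locally_injective (T U : finType) (e : rel T) (f : T -> U) : Prop :=
  forall v : T, {in nbhd e v &, injective f}.

(* K^-_{2n}: complete graph on 'I_(2n) minus the perfect matching {2k, 2k+1} *)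
Definition Kminus (n : nat) : rel 'I_(2 * n) :=
  fun i j => (i != j) && (i./2 != j./2).
Arguments Kminus n : clear implicits.

Definition two_permutable (T : finType) (e : rel T) : Prop :=
  exists d : nat, regular e (2 * d) /\ connected_graph e /\
    exists f : T -> 'I_(2 * (d + 1)),
      is_hom e (Kminus (d + 1)) f /\ locally_injective e f.

Definition cartesian (T U : finType) (e1 : rel T) (e2 : rel U) : rel (T * U) :=
  fun a b => (e1 a.1 b.1 && (a.2 == b.2)) || ((a.1 == b.1) && e2 a.2 b.2).

Definition K2 : rel bool := fun a b => a != b.

Definition max_degree (T : finType) (e : rel T) : nat := \max_(v : T) #|nbhd e v|.

(* Incidences: an incidence (v, vw) is encoded as the pair (v, w) with e v w. *)
Definition is_incidence (T : finType) (e : rel T) (p : T * T) : bool := e p.1 p.2.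

Definition inc_adj (T : finType) (p q : T * T) : bool :=
  let: (v, w) := p in let: (u, x) := q in
  [|| v == u, [set v; w] == [set u; x], [set v; u] == [set v; w]
    | [set v; u] == [set u; x]].

Definition is_incidence_coloring (T : finType) (e : rel T) (k : nat)
  (c : T * T -> 'I_k) : bool :=
  [forall p : T * T, forall q : T * T,
     [&& p != q, is_incidence e p, is_incidence e q & inc_adj p q] ==>
     (c p != c q)].

Definition inc_colorable (T : finType) (e : rel T) (k : nat) : bool :=
  [exists c : {ffun T * T -> 'I_k}, is_incidence_coloring e c].

Lemma inc_colorable_ex (T : finType) (e : rel T) :
  exists k, inc_colorable e k.
Proof.
exists #|{: T * T}|; apply/existsP; exists [ffun p => enum_rank p].
apply/forallP => p; apply/forallP => q; apply/implyP => /andP [npq _].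
rewrite !ffunE; apply: contra npq => /eqP H; apply/eqP.
exact: enum_rank_inj.
Qed.

Definition inc_chi (T : finType) (e : rel T) : nat := ex_minn (inc_colorable_ex e).

(* Main.v *)
Require Import Defs.
From mathcomp Require Import all_boot.
From mathcomp Require Import zify.

Lemma set2_in (U : finType) (a b c d : U) :
  [set a; b] == [set c; d] -> (c == a) || (c == b).
Proof. move=> /eqP H. have : c \in [set c; d] by rewrite in_set2 eqxx.
by rewrite -H in_set2. Qed.

Lemma set2_in' (U : finType) (a b c d : U) :
  [set a; b] == [set c; d] -> (d == a) || (d == b).
Proof. move=> /eqP H. have : d \in [set c; d] by rewrite in_set2 eqxx orbT.
by rewrite -H in_set2. Qed.

Lemma coloring_from_vertex (U : finType) (E : rel U) (k : nat) (phi : U -> 'I_k)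
  (Esym : symmetric E) (Eirr : irreflexive E)
  (hA : forall a b, E a b -> phi a != phi b)
  (hB : forall v a b, E v a -> E v b -> a != b -> phi a != phi b) :
  is_incidence_coloring E (fun p => phi p.2).
Proof.
apply/forallP => [[v w]]; apply/forallP => [[u x]]; apply/implyP.
rewrite /is_incidence /=.
case/and4P => npq Evw Eux /or4P H.
have [wx|nwx] := eqVneq w x.
  subst x; exfalso; case: H.
  - move/eqP=> vu; subst u; by rewrite eqxx in npq.
  - rewrite eq_sym => /set2_in /orP [/eqP vu|/eqP vw].
    + subst u; by rewrite eqxx in npq.
    + subst v; by rewrite Eirr in Evw.
  - rewrite eq_sym => /set2_in' /orP [/eqP uv|/eqP uw].
    + subst u; by rewrite eqxx in npq.
    + subst u; by rewrite Eirr in Eux.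
  - rewrite eq_sym => /set2_in /orP [/eqP vu|/eqP vw].
    + subst u; by rewrite eqxx in npq.
    + subst v; by rewrite Eirr in Evw.
case: H.
- move/eqP=> vu; subst u; exact: hB Evw Eux nwx.
- move=> H; move: (H) => /set2_in /orP [/eqP uv|/eqP uw].
  + subst u; exact: hB Evw Eux nwx.
  + subst u. have : (x == v) || (x == w).
      by move: H => /set2_in'.
    case/orP => [/eqP xv|/eqP xw]; last by subst x; rewrite Eirr in Eux.
    subst x; apply: hA; by rewrite Esym.
- rewrite eq_sym => /set2_in' /orP [/eqP uv|/eqP uw].
  + subst u; exact: hB Evw Eux nwx.
  + subst u; exact: hA.
- rewrite eq_sym => /set2_in /orP [/eqP vu|/eqP vx].
  + subst u; exact: hB Evw Eux nwx.
  + subst v; apply: hA; by rewrite Esym.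
Qed.

Lemma coloring_lower (U : finType) (E : rel U) (k : nat) (c : U * U -> 'I_k)
  (Esym : symmetric E) (Eirr : irreflexive E) (z y0 : U) (Ezy : E z y0) :
  is_incidence_coloring E c -> #|nbhd E z| + 1 <= k.
Proof.
move=> /forallP hc.
set S := (y0, z) |: [set (z, y) | y in nbhd E z].
have cS : #|S| = #|nbhd E z| + 1.
  rewrite cardsU1 card_imset; last by move=> a b [].
  have -> : (y0, z) \notin [set (z, y) | y in nbhd E z].
    apply/imsetP => [[y _ [e1 e2]]]; subst; by rewrite Eirr in Ezy.
  by rewrite addnC.
have inS : forall p, p \in S -> is_incidence E p.
  move=> p; rewrite /S in_setU1 => /orP [/eqP ->|/imsetP [y]].
    by rewrite /is_incidence /= Esym.
  by rewrite /nbhd inE => Ey ->.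
have adjS : forall p q, p \in S -> q \in S -> inc_adj p q.
  move=> p q; rewrite /S !in_setU1 => /orP [/eqP ->|/imsetP [y _ ->]]
     /orP [/eqP ->|/imsetP [y' _ ->]] /=.
  - by apply/or4P; constructor 1.
  - by apply/or4P; constructor 3.
  - by apply/or4P; constructor 4; rewrite setUC.
  - by apply/or4P; constructor 1.
have inj : {in S &, injective c}.
  move=> p q pS qS cpq; apply/eqP; apply: contraT => npq.
  move: (hc p) => /forallP /(_ q) /implyP.
  by rewrite npq inS // inS // adjS // cpq eqxx => /(_ isT).
rewrite -cS -(card_in_imset inj).
by apply: leq_trans (max_card _) _; rewrite card_ord.
Qed.

Lemma flip_lt {n} (i : 'I_(2 * n)) : (~~ odd i) + (i./2).*2 < 2 * n.
Proof.
have : i./2 < n by rewrite ltn_half_double -mul2n.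
case: (odd i) => /=; lia.
Qed.

Definition flip {n} (i : 'I_(2 * n)) : 'I_(2 * n) := Ordinal (@flip_lt n i).

Lemma flip_half {n} (i : 'I_(2 * n)) : (flip i)./2 = i./2.
Proof. by rewrite /= half_bit_double. Qed.

Lemma flip_odd {n} (i : 'I_(2 * n)) : odd (flip i) = ~~ odd i.
Proof. rewrite /=. rewrite oddD odd_double addbF. by case: (odd i). Qed.

Lemma ord_eq {m} (i j : 'I_m) : i./2 = j./2 -> odd i = odd j -> i = j.
Proof.
move=> h o; apply: val_inj => /=.
by rewrite -[val i]odd_double_half -[val j]odd_double_half h o.
Qed.

Section Main.
Variables (T : finType) (e : rel T) (n : nat) (f : T -> 'I_(2 * n)).
Definition phi (p : T * bool) : 'I_(2 * n) := if p.2 then flip (f p.1) else f p.1.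

Lemma phi_half p : (phi p)./2 = (f p.1)./2.
Proof. by rewrite /phi; case: p.2; rewrite ?flip_half. Qed.
Lemma phi_odd p : odd (phi p) = odd (f p.1) (+) p.2.
Proof. by rewrite /phi; case: p.2; rewrite ?flip_odd ?addbT ?addbF. Qed.

Lemma phi_eq p q : phi p = phi q ->
  (f p.1)./2 = (f q.1)./2 /\ odd (f p.1) (+) p.2 = odd (f q.1) (+) q.2.
Proof. by move=> h; rewrite -!phi_half -!phi_odd h. Qed.

Hypothesis hom : is_hom e (Kminus n) f.
Hypothesis li : locally_injective e f.

Lemma phiA a b : cartesian e K2 a b -> phi a != phi b.
Proof.
case: a b => [a1 a2] [b1 b2]; rewrite /cartesian /K2 /=.
case/orP => [/andP [eab /eqP <-]|/andP [/eqP <- nb]];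
  apply/negP => /eqP /phi_eq /= [h o].
- move: (hom _ _ eab); rewrite /Kminus h eqxx andbF; done.
- move: nb o; case: a2; case: b2; case: (odd _) => //.
Qed.

Lemma phiB v a b : cartesian e K2 v a -> cartesian e K2 v b -> a != b ->
  phi a != phi b.
Proof.
case: v a b => [v1 v2] [a1 a2] [b1 b2]; rewrite /cartesian /K2 /=.
case/orP => [/andP [ea /eqP ea2]|/andP [/eqP ea1 na]];
case/orP => [/andP [eb /eqP eb2]|/andP [/eqP eb1 nb]] nab;
  apply/negP => /eqP /phi_eq /= [h o].
- subst a2 b2.
  have : f a1 = f b1.
    apply: ord_eq => //; move: o; case: (v2); case: (odd (f a1)); case: (odd (f b1)) => //.
  move/(li v1); rewrite /nbhd !inE => /(_ ea eb) ab; subst b1.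
  by rewrite eqxx in nab.
- subst b1; move: (hom _ _ ea); rewrite /Kminus h eqxx andbF; done.
- subst a1; move: (hom _ _ eb); rewrite /Kminus h eqxx andbF; done.
- subst a1 b1; clear o h; move: nab nb na; case: a2; case: b2; case: v2 => //=; by rewrite eqxx.
Qed.
End Main.

Theorem mainTheorem7 (T : finType) (e : rel T)
  (e_sym : symmetric e) (e_irr : irreflexive e)
  (hG : two_permutable e) :
  inc_chi (cartesian e K2) = max_degree (cartesian e K2) + 1.
Proof.
case: hG => d [reg [[T0 _] [f [hom li]]]].
case/card_gt0P: T0 => v0 _.
set E := cartesian e K2.
have Esym : symmetric E.
  move=> [a1 a2] [b1 b2]; rewrite /E /cartesian /K2 /= e_sym.
  by rewrite (eq_sym b1) (eq_sym b2).
have Eirr : irreflexive E.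
  by move=> [a1 a2]; rewrite /E /cartesian /K2 /= e_irr !eqxx.
have deg : 2 * d + 1 <= #|nbhd E (v0, false)|.
  have sub : (v0, true) |: [set (w, false) | w in nbhd e v0] \subset nbhd E (v0, false).
    apply/subsetP => p; rewrite in_setU1 => /orP [/eqP ->|/imsetP [w]].
      by rewrite /nbhd inE /E /cartesian /K2 /= eqxx orbT.
    by rewrite /nbhd !inE => ew ->; rewrite /E /cartesian /= ew eqxx.
  apply: leq_trans (subset_leq_card sub).
  rewrite cardsU1 card_imset; last by move=> a b [].
  have -> : (v0, true) \notin [set (w, false) | w in nbhd e v0].
    by apply/imsetP => [[w _ []]].
  by rewrite reg addnC.
have Dge : 2 * d + 1 <= max_degree E.
  apply: leq_trans deg _; rewrite /max_degree; exact: (leq_bigmax (F := fun v => #|nbhd E v|) (v0, false)).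
have col : inc_colorable E (2 * (d + 1)).
  apply/existsP; exists [ffun p => @phi T (d + 1) f p.2].
  have H := @coloring_from_vertex _ E _ (@phi T (d + 1) f) Esym Eirr (@phiA T e _ f hom) (@phiB T e _ f hom li).
  apply/forallP => p; apply/forallP => q; rewrite !ffunE.
  by move/forallP: H => /(_ p) /forallP /(_ q).
rewrite /inc_chi; case: ex_minnP => m colm minm.
have le1 : m <= 2 * (d + 1) := minm _ col.
have pos : 0 < #|{: T * bool}| by apply/card_gt0P; exists (v0, false).
have [z hz] := @eq_bigmax _ (fun v => #|nbhd E v|) pos.
have le2 : max_degree E + 1 <= m.
  have : 0 < #|nbhd E z|.
    rewrite -hz; apply: leq_trans Dge; lia.
  case/card_gt0P => y0; rewrite /nbhd inE => Ezy.
  case/existsP: colm => c hc.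
  rewrite /max_degree hz; exact: (@coloring_lower _ E _ c Esym Eirr _ _ Ezy hc).
lia.
Qed.
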